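(* Let $\Gamma$ be an Arf numerical semigroup with conductor $c$ and multiplicity $e$. Let $e'\in\Gamma\setminus\{0\}$, let $\Gamma_{e'}=\{0\}\cup(e'+\Gamma)$, and let $c'=c+e'$ (the conductor of $\Gamma_{e'}$). Then for every $k\in\mathbb N$, \[ \delta^2_{\Gamma_{e'}}(c'+e'+k)=\begin{cases}\delta^2_\Gamma(c+k)+2 & \text{if } e'=e \text{ and } \delta^1_\Gamma(c+e+k)=\delta^2_\Gamma(c+k),\\ \delta^2_\Gamma(c+k)+3 & \text{otherwise.}\end{cases} \]
   Context: A numerical semigroup is a subset $\Gamma\subseteq\mathbb N$ containing $0$, closed under addition, with finite complement in $\mathbb N$; its elements are $0=\rho_1<\rho_2<\cdots$, its multiplicity is $\rho_2$ and its conductor is the least $c$ with $c+\mathbb N\subseteq\Gamma$. $\Gamma$ is Arf if $\rho_i+\rho_j-\rho_k\in\Gamma$ whenever $i\ge j\ge k$. For $x\in\mathbb Z$, $D_\Gamma(x)=\{s\in\Gamma: x-s\in\Gamma\}$ and $D_\Gamma(x_1,\dots,x_k)=\bigcup_i D_\Gamma(x_i)$. For an integer $m$: $\delta^1_\Gamma(m)=\min\{|D_\Gamma(m_1)|: m\le m_1\in\Gamma\}$ and $\delta^2_\Gamma(m)=\min\{|D_\Gamma(m_1,m_2)|: m\le m_1<m_2,\ m_1,m_2\in\Gamma\}$ (first and second Feng-Rao distances). *)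

(* Defs.v *)
From mathcomp Require Import all_boot.
From Stdlib Require Import ClassicalEpsilon.

Set Implicit Arguments.
Unset Strict Implicit.
Unset Printing Implicit Defensive.

Definition numerical_semigroup (G : pred nat) : Prop :=
  [/\ G 0,
      (forall x y, G x -> G y -> G (x + y)) &
      exists N, forall n, N <= n -> G n].

Definition Arf (G : pred nat) : Prop :=
  forall x y z, G x -> G y -> G z -> y <= x -> z <= y -> G (x + y - z).

Definition is_multiplicity (G : pred nat) (e : nat) : Prop :=
  [/\ G e, 0 < e & forall x, G x -> 0 < x -> e <= x].

Definition is_conductor (G : pred nat) (c : nat) : Prop :=
  (forall n, c <= n -> G n) /\
  (forall c', (forall n, c' <= n -> G n) -> c <= c').

Definition shift_sg (G : pred nat) (e' : nat) : pred nat :=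
  fun x => (x == 0) || ((e' <= x) && G (x - e')).

(* s \in D_G(x): s in G and x - s in G (for natural x, this forces s <= x). *)
Definition inD (G : pred nat) (x s : nat) : bool :=
  [&& s <= x, G s & G (x - s)].

Definition cardD1 (G : pred nat) (x : nat) : nat :=
  count (inD G x) (iota 0 x.+1).

Definition cardD2 (G : pred nat) (x1 x2 : nat) : nat :=
  count (fun s => inD G x1 s || inD G x2 s) (iota 0 (maxn x1 x2).+1).

(* The minimum of a set of naturals (well defined whenever it is nonempty,
   chosen by Hilbert's epsilon). *)
Definition nat_min (P : nat -> Prop) : nat :=
  epsilon (inhabits 0) (fun d => P d /\ forall d', P d' -> d <= d').

Definition delta1 (G : pred nat) (m : nat) : nat :=
  nat_min (fun d => exists m1, [/\ m <= m1, G m1 & d = cardD1 G m1]).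

Definition delta2 (G : pred nat) (m : nat) : nat :=
  nat_min (fun d => exists m1 m2,
    [/\ m <= m1, m1 < m2, G m1, G m2 & d = cardD2 G m1 m2]).

(* Main.v *)
From mathcomp Require Import all_boot.
Require Import Defs.
From mathcomp Require Import zify.
From Stdlib Require Import ClassicalEpsilon.

Lemma nat_minP (P : nat -> Prop) : (exists d, P d) ->
  P (nat_min P) /\ forall d', P d' -> nat_min P <= d'.
Proof.
move=> [d Pd]; rewrite /nat_min.
have H : forall n d, d <= n -> P d -> exists m, P m /\ forall d', P d' -> m <= d'.
  elim=> [|n IH] d0 hd Pd0.
    exists 0; split; last by []. by move: hd; rewrite leqn0 => /eqP <-.
  case: (excluded_middle_informative (exists d', P d' /\ d' < d0)) => [[d' [Pd' lt]]|nex].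
    by apply: (IH d') => //; lia.
  exists d0; split=> // d' Pd'; rewrite leqNgt; apply/negP => lt; apply: nex; by exists d'.
exact: (epsilon_spec _ (fun m => P m /\ forall d', P d' -> m <= d') (H d d (leqnn d) Pd)).
Qed.

Lemma count_ext (P : pred nat) M N : M <= N -> (forall s, P s -> s < M) ->
  count P (iota 0 N) = count P (iota 0 M).
Proof.
move=> hMN hP; rewrite -(subnKC hMN) iotaD count_cat add0n.
rewrite (@eq_in_count _ _ pred0 (iota M (N - M))) ?count_pred0 ?addn0 //.
move=> s; rewrite mem_iota => /andP[h1 _] /=.
case Ps: (P s) => //; have := hP _ Ps; lia.
Qed.

Lemma cnt_split (P : pred nat) x l :
  count P l = count (fun s => P s && (s != x)) l + P x * count (pred1 x) l.
Proof.
elim: l => [|y l IH] /=; first by rewrite muln0.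
rewrite IH.
case: (eqVneq y x) => [->|nyx] /=; case: (P x) => /=; try lia.
all: case: (P y) => /=; lia.
Qed.

Lemma count_drop1 (P : pred nat) N x : x < N ->
  count P (iota 0 N) = count (fun s => P s && (s != x)) (iota 0 N) + P x.
Proof.
move=> hx; rewrite (cnt_split P x) count_uniq_mem ?iota_uniq // mem_iota.
have -> : (0 <= x < 0 + N) = true by apply/andP; split; lia.
by rewrite muln1.
Qed.

Lemma inD_mono (G : pred nat) n1 n2 s : (forall x y, G x -> G y -> G (x + y)) ->
  n1 <= n2 -> G (n2 - n1) -> inD G n1 s -> inD G n2 s.
Proof.
move=> Gadd h12 Gd /and3P [h1 h2 h3]; apply/and3P; split => //; first lia.
have -> : n2 - s = (n1 - s) + (n2 - n1) by lia.
by apply: Gadd.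
Qed.

Lemma cardD2_sub (G : pred nat) n1 n2 : (forall x y, G x -> G y -> G (x + y)) ->
  n1 <= n2 -> G (n2 - n1) -> cardD2 G n1 n2 = cardD1 G n2.
Proof.
move=> Gadd h Gd; rewrite /cardD2 /cardD1 (maxn_idPr h); apply: eq_count => s /=.
by case h1: (inD G n1 s) => //=; rewrite (inD_mono _ _ _ _ Gadd h Gd h1).
Qed.

Lemma cardD1_ext (G : pred nat) m N : m < N -> cardD1 G m = count (inD G m) (iota 0 N).
Proof.
move=> h; rewrite /cardD1 (@count_ext _ m.+1 N) //.
by move=> s /and3P [? _ _].
Qed.

Lemma strictD (G : pred nat) c e n d : G 0 -> Arf G -> (forall n, c <= n -> G n) ->
  is_multiplicity G e -> c <= n -> G d -> e < d -> cardD1 G (n+e) < cardD1 G (n+d).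
Proof.
move=> G0 Garf Gc [Ge e0 emin] hn Gd hed.
have hN : n + e < (n+d).+1 by lia.
rewrite (cardD1_ext G (n+e) (n+d).+1) // /cardD1.
rewrite (count_drop1 (inD G (n+e)) (n+d).+1 (n+e)) //.
rewrite [X in _ < X](count_drop1 _ _ (n+d)) //.
rewrite [count (fun s => _ && _) (iota 0 (n+d).+1) in X in _ < X](count_drop1 _ _ (n+d-e)); last lia.
have h0 : inD G (n+e) (n+e) by rewrite /inD leqnn subnn G0 Gc //=; lia.
have h1 : inD G (n+d) (n+d) by rewrite /inD leqnn subnn G0 Gc //=; lia.
have h2 : inD G (n+d) (n+d-e).
  rewrite /inD (_ : n + d - (n + d - e) = e); last lia.
  by rewrite Ge Gc ?andbT; lia.
have h3 : n+d-e != n+d by lia.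
set l := iota 0 (n+d).+1.
have h4 : (fun s => inD G (n+d) s && (s != n+d)) (n+d-e) = true by rewrite /= h2 h3.
rewrite h0 h1 h4.
suff : count (fun s => inD G (n + e) s && (s != n + e)) l <=
  count (fun s => inD G (n + d) s && (s != n + d) && (s != n + d - e)) l by lia.
apply: sub_count => s /andP [/and3P [k1 k2 k3] hne].
have slt : s < n+e by lia.
have te : e <= n+e-s by apply: emin => //; lia.
have sne : s != n+d-e.
  apply/eqP => hs; rewrite hs in k3.
  have hpos : 0 < n + e - (n + d - e) by lia.
  have := emin _ k3 hpos; lia.
have hnd : s != n+d by lia.
rewrite sne hnd !andbT.
apply/and3P; split => //; first lia.
have -> : n+d-s = (n+e-s) + d - e by lia.
case: (leqP (n+e-s) d) => hl.
  rewrite [_ + d]addnC; exact: (Garf _ _ _ Gd k3 Ge hl te).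
exact: (Garf _ _ _ k3 Gd Ge (ltnW hl) (ltnW hed)).
Qed.

Lemma inD_shift (G : pred nat) e' m s : 0 < e' -> 2*e' <= m -> G (m - e') ->
  inD (shift_sg G e') m s = [|| s == 0, s == m | (e' <= s) && inD G (m - 2*e') (s - e')].
Proof.
move=> he hm Gm; rewrite /inD /shift_sg.
have em : e' <= m by lia.
case: (eqVneq s 0) => [->|s0] /=; first by rewrite subn0 em Gm orbT.
case: (eqVneq s m) => [->|sm] /=; first by rewrite leqnn subnn em Gm.
case: (leqP e' s) => hes /=; last by rewrite andbF.
case: (leqP s m) => hsm /=; last first.
  have /negbTE -> : ~~ (s - e' <= m - 2*e') by rewrite -ltnNge; lia.
  by [].
have -> : (m - s == 0) = false by apply/negbTE; lia.
case: (leqP e' (m - s)) => h2 /=.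
  have -> : s - e' <= m - 2*e' by lia.
  have -> : m - 2*e' - (s - e') = m - s - e' by lia.
  by [].
have /negbTE -> : ~~ (s - e' <= m - 2*e') by rewrite -ltnNge; lia.
by rewrite !andbF.
Qed.

Lemma inD_big (G : pred nat) m x : m < x -> inD G m x = false.
Proof. by move=> h; rewrite /inD; have /negbTE -> : ~~ (x <= m) by rewrite -ltnNge. Qed.

Lemma count1 N x : x < N -> count (fun s => s == x) (iota 0 N) = 1.
Proof.
move=> h; rewrite (@eq_count _ _ (pred1 x)) // count_uniq_mem ?iota_uniq // mem_iota.
by have -> : (0 <= x < 0 + N) = true by apply/andP; split; lia.
Qed.

Lemma count3 N x y z : x < y -> y < z -> z < N ->
  count (fun s => [|| s == x, s == y | s == z]) (iota 0 N) = 3.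
Proof.
move=> hxy hyz hz.
rewrite (count_drop1 _ N z) // (count_drop1 _ N y); last lia.
rewrite (count_drop1 _ N x); last lia.
rewrite (@eq_count _ _ pred0) ?count_pred0; last first.
  move=> s /=; case: (eqVneq s x) => [->|]; first by rewrite ?eqxx ?andbF.
  case: (eqVneq s y) => [->|]; first by rewrite ?eqxx ?andbF.
  case: (eqVneq s z) => [->|]; first by rewrite ?eqxx ?andbF.
  by [].
have n1 : (x == y) = false by apply/eqP; lia.
have n2 : (x == z) = false by apply/eqP; lia.
have n3 : (y == z) = false by apply/eqP; lia.
have n4 : (y == x) = false by apply/eqP; lia.
have n5 : (z == x) = false by apply/eqP; lia.
have n6 : (z == y) = false by apply/eqP; lia.
by rewrite /= !eqxx n1 n2 n3 n4 n5 n6 /=.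
Qed.

Lemma cardD2_shift (G : pred nat) e' m1 m2 : 0 < e' -> 2*e' <= m1 -> m1 < m2 ->
  G (m1 - e') -> G (m2 - e') ->
  cardD2 (shift_sg G e') m1 m2 + inD G (m2 - 2*e') (m1 - e') =
  cardD2 G (m1 - 2*e') (m2 - 2*e') + 3.
Proof.
move=> he h1 h12 G1 G2.
have hn12 : m1 - 2*e' <= m2 - 2*e' by lia.
rewrite /cardD2 (maxn_idPr (ltnW h12)) (maxn_idPr hn12).
pose Q := fun s => inD G (m1 - 2*e') s || inD G (m2 - 2*e') s.
pose A := fun s : nat => [|| s == 0, s == m1 | s == m2].
pose B := fun s => (e' <= s) && Q (s - e').
have E : (fun s => inD (shift_sg G e') m1 s || inD (shift_sg G e') m2 s) =1 predU A B.
  move=> s /=; rewrite !inD_shift //; last lia.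
  rewrite /A /B /Q.
  case: (s == 0); case: (s == m1); case: (s == m2); case: (e' <= s);
    case: (inD G (m1 - 2*e') (s - e')); by case: (inD G (m2 - 2*e') (s - e')).
rewrite (eq_count E).
have UI := count_predUI A B (iota 0 m2.+1).
have cA : count A (iota 0 m2.+1) = 3 by apply: count3; lia.
have cI : count (predI A B) (iota 0 m2.+1) = inD G (m2 - 2*e') (m1 - e').
  rewrite (@eq_count _ _ (fun s => (s == m1) && inD G (m2 - 2*e') (m1 - e'))); last first.
    move=> s; rewrite /= /A /B /Q.
    case: (eqVneq s m1) => [->|sm1].
      rewrite ?eqxx ?orbT /=.
      have -> : e' <= m1 by lia.
      by rewrite inD_big //; lia.
    rewrite /=.
    case: (eqVneq s 0) => [->|s0] /=.
      by have -> : (e' <= 0) = false by apply/negbTE; rewrite -ltnNge.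
    case: (eqVneq s m2) => [->|sm2] /=; last by [].
    by rewrite !inD_big ?andbF //; lia.
  case: (inD G (m2 - 2*e') (m1 - e')).
    rewrite (@eq_count _ _ (fun s => s == m1)); last by move=> s; rewrite andbT.
    by apply: count1; lia.
  by rewrite (@eq_count _ _ pred0) ?count_pred0 // => s; rewrite andbF.
have cB : count B (iota 0 m2.+1) = count Q (iota 0 (m2 - 2*e').+1).
  have -> : m2.+1 = e' + (m2.+1 - e') by lia.
  rewrite iotaD count_cat.
  rewrite (@eq_in_count _ _ pred0 (iota 0 e')) ?count_pred0; last first.
    move=> s; rewrite mem_iota => /andP [_ hs] /=; rewrite /B.
    by have -> : (e' <= s) = false by apply/negbTE; rewrite -ltnNge.
  have -> : iota (0 + e') (m2.+1 - e') = map (addn e') (iota 0 (m2.+1 - e')).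
    by rewrite -iotaDl addn0 add0n.
  rewrite count_map add0n.
  rewrite (@eq_count _ _ Q); last first.
    by move=> s; rewrite /= /B leq_addr /=; rewrite (_ : e' + s - e' = s) //; lia.
  apply: count_ext; first lia.
  move=> s; rewrite /Q => /orP [] /and3P [hs _ _]; lia.
rewrite /Q in cB. rewrite cA cI cB in UI. lia.
Qed.

Theorem theorem4p15 (G : pred nat) (c e e' : nat) :
  numerical_semigroup G -> Arf G ->
  is_conductor G c -> is_multiplicity G e ->
  G e' -> 0 < e' ->
  forall k : nat,
    delta2 (shift_sg G e') ((c + e') + e' + k) =
    if (e' == e) && (delta1 G (c + e + k) == delta2 G (c + k))
    then delta2 G (c + k) + 2
    else delta2 G (c + k) + 3.
Proof.
move=> [G0 Gadd _] Garf [Gc _] [Ge e0 emin] Ge' e'0 k.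
have mult : is_multiplicity G e by split.
have [[p1 [p2 [hp1 hp12 Gp1 Gp2 hV]]] Vmin] :
  (exists m1 m2, [/\ c + k <= m1, m1 < m2, G m1, G m2 & delta2 G (c + k) = cardD2 G m1 m2]) /\
  (forall d, (exists m1 m2, [/\ c + k <= m1, m1 < m2, G m1, G m2 & d = cardD2 G m1 m2]) ->
     delta2 G (c + k) <= d).
  apply: nat_minP; exists (cardD2 G (c+k) (c+k).+1), (c+k), (c+k).+1.
  by split => //; apply: Gc; lia.
have [[q [hq Gq hW]] Wmin] :
  (exists m1, [/\ c + e + k <= m1, G m1 & delta1 G (c + e + k) = cardD1 G m1]) /\
  (forall d, (exists m1, [/\ c + e + k <= m1, G m1 & d = cardD1 G m1]) ->
     delta1 G (c + e + k) <= d).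
  apply: nat_minP; exists (cardD1 G (c+e+k)), (c+e+k).
  by split => //; apply: Gc; lia.
set V := delta2 G (c + k) in hV Vmin *.
set W := delta1 G (c + e + k) in hW Wmin *.
have Vle : forall m1 m2, c + k <= m1 -> m1 < m2 -> V <= cardD2 G m1 m2.
  move=> m1 m2 h1 h2; apply: Vmin; exists m1, m2; split => //; apply: Gc; lia.
have Wle : forall m, c + e + k <= m -> W <= cardD1 G m.
  move=> m h; apply: Wmin; exists m; split => //; apply: Gc; lia.
have WV : V <= W.
  have := Vle (q - e) q ltac:(lia) ltac:(lia).
  have -> : cardD2 G (q - e) q = cardD1 G q.
    by apply: cardD2_sub => //; [lia | rewrite (_ : q - (q - e) = e) //; lia].
  by rewrite hW.
have LA : forall n1 n2, c + k <= n1 -> n1 + e' <= n2 -> G (n2 - n1 - e') ->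
    cardD2 G n1 n2 = V -> e' = e /\ W = V.
  move=> n1 n2 h1 h2 Gg hc.
  have Gd : G (n2 - n1).
    have -> : n2 - n1 = e' + (n2 - n1 - e') by lia.
    by apply: Gadd.
  have hsub : cardD2 G n1 n2 = cardD1 G n2 by apply: cardD2_sub => //; lia.
  have ee' : e <= e' by apply: emin.
  have nlt : ~ e < e'.
    move=> lt.
    have := strictD G c e n1 (n2 - n1) G0 Garf Gc mult ltac:(lia) Gd ltac:(lia).
    rewrite (_ : n1 + (n2 - n1) = n2); last lia.
    have := Vle n1 (n1 + e) h1 ltac:(lia).
    have -> : cardD2 G n1 (n1 + e) = cardD1 G (n1 + e).
      by apply: cardD2_sub => //; [lia | rewrite (_ : n1 + e - n1 = e) //; lia].
    lia.
  have e'e : e' = e by lia.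
  split => //.
  have := Wle n2 ltac:(lia); lia.
set M := c + e' + e' + k.
set Gs := shift_sg G e'.
have Gsh : forall m, M <= m -> Gs m.
  move=> m hm; rewrite /Gs /shift_sg; apply/orP; right; apply/andP; split; first lia.
  apply: Gc; lia.
have [[m1 [m2 [hm1 hm12 G'1 G'2 hD]]] Dmin] :
  (exists m1 m2, [/\ M <= m1, m1 < m2, Gs m1, Gs m2 & delta2 Gs M = cardD2 Gs m1 m2]) /\
  (forall d, (exists m1 m2, [/\ M <= m1, m1 < m2, Gs m1, Gs m2 & d = cardD2 Gs m1 m2]) ->
     delta2 Gs M <= d).
  apply: nat_minP; exists (cardD2 Gs M M.+1), M, M.+1.
  by split => //; apply: Gsh; lia.
have SH : forall m1 m2, M <= m1 -> m1 < m2 ->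
    cardD2 Gs m1 m2 + inD G (m2 - 2*e') (m1 - e') = cardD2 G (m1 - 2*e') (m2 - 2*e') + 3.
  { move=> x y hx hxy; rewrite /M in hx.
    apply: cardD2_shift => //.
    all: try apply: Gc; clear -hx hxy; lia. }
clear Vmin Wmin Wle mult.
rewrite /M in Gsh hm1 SH Dmin *.
apply/eqP; rewrite eqn_leq; apply/andP; split.
  case: ifP => [/andP [/eqP ee /eqP WeV] | hcond].
    have h1 : c + e' + e' + k <= q - e + 2*e' by clear -hq ee; lia.
    have h2 : q - e + 2*e' < q + 2*e' by clear -hq e0; lia.
    apply: Dmin; exists (q - e + 2*e'), (q + 2*e'); split => //; try (apply: Gsh; clear -h1 h2; lia).
    have := SH (q - e + 2*e') (q + 2*e') h1 h2.
    rewrite (_ : q - e + 2*e' - 2*e' = q - e); last by clear; lia.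
    rewrite (_ : q + 2*e' - 2*e' = q); last by clear; lia.
    rewrite (_ : q - e + 2*e' - e' = q); last by clear -hq ee; lia.
    have -> : inD G q q by rewrite /inD leqnn subnn G0 Gq.
    have -> : cardD2 G (q - e) q = cardD1 G q.
      by apply: cardD2_sub => //; [clear; lia | rewrite (_ : q - (q - e) = e) //; clear -hq; lia].
    rewrite -hW WeV; clear; lia.
  have h1 : c + e' + e' + k <= p1 + 2*e' by clear -hp1; lia.
  have h2 : p1 + 2*e' < p2 + 2*e' by clear -hp12; lia.
  apply: Dmin; exists (p1 + 2*e'), (p2 + 2*e'); split => //; try (apply: Gsh; clear -h1 h2; lia).
  have := SH (p1 + 2*e') (p2 + 2*e') h1 h2.
  rewrite (_ : p1 + 2*e' - 2*e' = p1); last by clear; lia.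
  rewrite (_ : p2 + 2*e' - 2*e' = p2); last by clear; lia.
  rewrite (_ : p1 + 2*e' - e' = p1 + e'); last by clear; lia.
  case h: (inD G p2 (p1 + e')); last by rewrite -hV; clear; lia.
  move/and3P: h => [a b g].
  have [ee WeV] := LA p1 p2 hp1 a ltac:(by rewrite -subnDA) (esym hV).
  by rewrite ee WeV !eqxx in hcond.
rewrite hD.
have := SH m1 m2 hm1 hm12.
have a1 : c + k <= m1 - 2*e' by clear -hm1; lia.
have a2 : m1 - 2*e' < m2 - 2*e' by clear -hm1 hm12; lia.
have hVn := Vle (m1 - 2*e') (m2 - 2*e') a1 a2.
move: hVn; set X := cardD2 G (m1 - 2*e') (m2 - 2*e'); set Y := cardD2 Gs m1 m2.
case h: (inD G (m2 - 2*e') (m1 - e')); last by case: ifP => _; clear; lia.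
case: ifP => hcond; first by clear; lia.
have : X != V.
  apply/eqP => eqV.
  move/and3P: h => [a b g].
  have a3 : m1 - 2*e' + e' <= m2 - 2*e' by clear -a b hm1; lia.
  have a4 : m2 - 2 * e' - (m1 - 2 * e') - e' = m2 - 2 * e' - (m1 - e') by clear -hm1; lia.
  have [ee WeV] := LA (m1 - 2*e') (m2 - 2*e') a1 a3 ltac:(by rewrite a4) eqV.
  by rewrite ee WeV !eqxx in hcond.
clear; lia.
Qed.
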